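(* Let $n,r\in\mathbb{Z}_{\geq1}$ and $m\in\mathbb{Z}_{\geq0}$. Then \[ \mathrm{M}_m(\omega_{n,r})=\sum_{j\geq0}j^m\omega_{n,r}(j)=\sum_{i=0}^{\min(m,r)}\left\{m\atop i\right\}n^{-i}. \] In particular, if $m\leq r$, then $\mathrm{M}_m(\omega_{n,r})=\mathrm{M}_m(\rho_{1/n})$, where $\rho_{1/n}$ is the Poisson distribution with mean $1/n$.
   Context: $C_n\wr S_r=C_n^r\rtimes S_r$ (with $S_r$ permuting coordinates) acts on $B(n,r)=C_n\times\{1,\dots,r\}$ by $((\zeta_1,\dots,\zeta_r),\pi)\cdot(\zeta,i)=(\zeta_i\zeta,\pi(i))$. For $\sigma\in C_n\wr S_r$, $\mathrm{Fix}(\sigma)$ is its set of fixed points in $B(n,r)$ (its size is divisible by $n$). The distribution $\omega_{n,r}:\mathbb{Z}_{\geq0}\to\mathbb{R}_{\geq0}$ is $\omega_{n,r}(j)=|\{\sigma\in C_n\wr S_r: |\mathrm{Fix}(\sigma)|=jn\}|/|C_n\wr S_r|$. For a distribution $\omega$ on $\mathbb{Z}_{\geq0}$, $\mathrm{M}_m(\omega)=\sum_{j\ge0}j^m\omega(j)$. $\rho_\lambda(j)=e^{-\lambda}\lambda^j/j!$. $\left\{m\atop i\right\}$ is the Stirling number of the second kind, with $\left\{m\atop 0\right\}=1$ if $m=0$ and $0$ otherwise. *)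

(* Defs.v *)
From Stdlib Require Import Reals.
From mathcomp Require Import all_boot all_fingroup.
Set Implicit Arguments. Unset Strict Implicit. Unset Printing Implicit Defensive.

(* C_n is modelled additively as 'I_n (integers mod n, group law (a+b) mod n);
   {1,...,r} is modelled as 'I_r. *)

Definition wreath (n r : nat) : finType := ({ffun 'I_r -> 'I_n} * {perm 'I_r})%type.

Definition Bset (n r : nat) : finType := ('I_n * 'I_r)%type.

(* The action ((zeta_1..zeta_r),pi).(zeta,i) = (zeta_i zeta, pi(i)); first
   coordinate written additively as a natural number mod n. *)
Definition act_fst (n r : nat) (s : wreath n r) (x : Bset n r) : nat :=
  ((s.1 x.2 : nat) + (x.1 : nat)) %% n.
Definition act_snd (n r : nat) (s : wreath n r) (x : Bset n r) : 'I_r :=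
  s.2 x.2.

Definition Fix (n r : nat) (s : wreath n r) : {set Bset n r} :=
  [set x : Bset n r | (act_fst s x == (x.1 : nat)) && (act_snd s x == x.2)].

Definition omega (n r : nat) (j : nat) : R :=
  Rdiv (INR #|[set s : wreath n r | #|Fix s| == j * n]|) (INR #|[set: wreath n r]|).

(* M_m(omega_{n,r}) = sum_{j >= 0} j^m omega(j).  Since |Fix sigma| <= |B(n,r)| = n r,
   omega_{n,r}(j) = 0 for j > n r (n >= 1), so the series is the finite sum
   over 0 <= j <= n r. *)
Definition moment_omega (n r m : nat) : R :=
  sum_f_R0 (fun j => Rmult (pow (INR j) m) (omega n r j)) (n * r).

Fixpoint stirling2 (m i : nat) {struct m} : nat :=
  match m, i with
  | 0, 0 => 1
  | 0, _.+1 => 0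
  | _.+1, 0 => 0
  | m'.+1, i'.+1 => i'.+1 * stirling2 m' i'.+1 + stirling2 m' i'
  end.

Definition rho (lam : R) (j : nat) : R :=
  Rdiv (Rmult (exp (Ropp lam)) (pow lam j)) (INR (Factorial.fact j)).

(* Main.v *)
Require Import Defs.
From Stdlib Require Import Reals.
From mathcomp Require Import all_boot all_fingroup.
From Coquelicot Require Import Coquelicot.
Set Implicit Arguments. Unset Strict Implicit. Unset Printing Implicit Defensive.


Section Comb.
Local Open Scope nat_scope.
Variables (n r : nat).
Local Notation N := n.+1.

Definition FS (s : wreath N r) : {set 'I_r} :=
  [set i | (s.2 i == i) && (s.1 i == ord0)].
Definition J s := #|FS s|.

Lemma Fix_card s : #|Fix s| = J s * N.
Proof.
have -> : Fix s = setX [set: 'I_N] (FS s).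
  apply/setP => -[a i]; rewrite !inE /act_fst /act_snd /=.
  rewrite andbC; congr (_ && _).
  rewrite -{2}(modn_small (ltn_ord a)) -{2}(add0n a) eqn_modDr mod0n.
  by rewrite modn_small // -(inj_eq val_inj).
by rewrite cardsX cardsT card_ord mulnC.
Qed.

Lemma J_le s : J s <= r.
Proof. by have := max_card (mem (FS s)); rewrite card_ord. Qed.
End Comb.
Section Comb2.
Local Open Scope nat_scope.
Variables (n r : nat).
Local Notation N := n.+1.

Lemma fix_count i (f : {ffun 'I_i -> 'I_r}) : injective f ->
  \sum_(s : wreath N r) ((f \in ffun_on (FS s)) : nat) = N ^ (r - i) * (r - i)`!.
Proof.
move=> injf.
pose A := f @: [set: 'I_i].
have cA : #|A| = i by rewrite card_imset // cardsT card_ord.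
have cCA : #|~: A| = r - i by have := cardsC A; rewrite card_ord cA => h; rewrite -[in RHS]h addKn.
have E : forall s : wreath N r, (f \in ffun_on (FS s)) =
    (s \in setX [set z in pffun_on ord0 (~: A) predT] [set p in perm_on (~: A)]).
  move=> [z p]; rewrite !inE /=.
  apply/idP/idP.
  - move/ffun_onP => H; apply/andP; split.
      apply/pffun_onP; split; last by [].
      apply/subsetP => x; rewrite inE => nz; rewrite inE; apply/imsetP => -[k _ xk].
      by move: (H k); rewrite inE -xk (negbTE nz) andbF.
    apply/subsetP => x; rewrite inE => nz; rewrite inE; apply/imsetP => -[k _ xk].
    by move: (H k); rewrite inE -xk (negbTE nz).
  - case/andP => /pffun_onP[sup _] pp; apply/ffun_onP => k; rewrite inE.
    have Ak : f k \in A by apply: imset_f.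
    apply/andP; split; apply/negPn/negP => ne.
      by have := subsetP pp (f k) ne; rewrite inE Ak.
    by have := subsetP sup (f k) ne; rewrite inE Ak.
rewrite (eq_bigr (fun s => ((s \in setX [set z in pffun_on ord0 (~: A) predT] [set p in perm_on (~: A)]) : nat))); last by move=> s _; rewrite E.
rewrite -big_mkcond /= sum1_card cardsX !cardsE card_pffun_on card_perm cCA.
by rewrite card_ord.
Qed.
End Comb2.
Section Comb3.
Local Open Scope nat_scope.
Variables (n r : nat).
Local Notation N := n.+1.

Lemma sum_ffact i :
  \sum_(s : wreath N r) (J s) ^_ i = r ^_ i * (N ^ (r - i) * (r - i)`!).
Proof.
have E s : J s ^_ i = \sum_(f : {ffun 'I_i -> 'I_r})
     (((f \in ffun_on (FS s)) && injectiveb f) : nat).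
  have := card_inj_ffuns_on 'I_i (pred_of_set (FS s)); rewrite card_ord => h.
  rewrite /J -h -sum1_card big_mkcond /=.
  by apply: eq_bigr => f _; rewrite !inE.
under eq_bigr do rewrite E.
rewrite exchange_big /= (bigID (fun f : {ffun 'I_i -> 'I_r} => injectiveb f)) /=.
rewrite [X in _ + X]big1 ?addn0; last first.
  by move=> f /negbTE nf; apply: big1 => s _; rewrite nf andbF.
rewrite (eq_bigr (fun _ => N ^ (r - i) * (r - i)`!)); last first.
  move=> f injf; rewrite -(fix_count n (injectiveP _ injf)).
  by apply: eq_bigr => s _; rewrite injf andbT.
rewrite sum_nat_const; congr (_ * _).
have := card_inj_ffuns 'I_i 'I_r; rewrite !card_ord => <-.
by apply: eq_card => f; rewrite !inE.
Qed.

Lemma card_wreath : #|[set: wreath N r]| = N ^ r * r`!.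
Proof.
rewrite cardsT /wreath card_prod card_ffun !card_ord; congr (_ * _).
have := card_perm [set: 'I_r]; rewrite cardsT card_ord => <-.
by apply: eq_card => p; rewrite inE; apply/esym/subsetP => x; rewrite inE.
Qed.
End Comb3.
Section Stir.
Local Open Scope nat_scope.
Lemma stirling_gt m i : m < i -> stirling2 m i = 0.
Proof.
elim: m i => [|m IH] [|i] //= lt; rewrite !IH ?muln0 //; exact: ltnW.
Qed.

Lemma stirling2S m i : stirling2 m.+1 i.+1 = i.+1 * stirling2 m i.+1 + stirling2 m i.
Proof. by []. Qed.

Lemma mul_ffact x i : x * x ^_ i = x ^_ i.+1 + i * x ^_ i.
Proof.
rewrite ffactnSr; case: (leqP i x) => h.
  by rewrite [i * _]mulnC -mulnDr subnK // mulnC.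
by rewrite (ffact_small h) !muln0.
Qed.

Lemma stirling_ffact x m : x ^ m = \sum_(i < m.+1) stirling2 m i * x ^_ i.
Proof.
elim: m => [|m IH]; first by rewrite big_ord_recl big_ord0.
rewrite expnS IH big_distrr /=.
rewrite [RHS]big_ord_recl [X in X + _](_ : _ = 0) // add0n.
under [RHS]eq_bigr => i _ do rewrite lift0 /= mulnDl.
under eq_bigr do rewrite mulnCA mul_ffact mulnDr.
rewrite !big_split /= addnC; congr (_ + _).
rewrite big_ord_recl mul0n muln0 add0n [RHS]big_ord_recr /= (stirling_gt (ltnSn m)) muln0 mul0n addn0.
by apply: eq_bigr => i _; rewrite /bump /= add1n mulnCA mulnA.
Qed.
End Stir.
From mathcomp Require Import zify.
Section Key.
Local Open Scope nat_scope.
Variables (n r : nat).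
Local Notation N := n.+1.

Lemma sum_pow m : \sum_(s : wreath N r) J s ^ m =
  \sum_(i < m.+1) stirling2 m i * (r ^_ i * (N ^ (r - i) * (r - i)`!)).
Proof.
under eq_bigr do rewrite stirling_ffact.
rewrite exchange_big /=; apply: eq_bigr => i _.
by rewrite -big_distrr sum_ffact.
Qed.

Lemma key m : (\sum_(s : wreath N r) J s ^ m) * N ^ m =
  N ^ r * r`! * \sum_(i < (minn m r).+1) stirling2 m i * N ^ (m - i).
Proof.
rewrite sum_pow big_distrl big_distrr /=.
have le : (minn m r).+1 <= m.+1 by rewrite ltnS geq_minl.
rewrite (big_ord_widen m.+1 (fun i => N ^ r * r`! * (stirling2 m i * N ^ (m - i))) le).
rewrite [RHS]big_mkcond /=; apply: eq_bigr => i _.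
have im : i <= m by rewrite -ltnS.
rewrite ltnS leq_min im /=.
case: leqP => ir.
  rewrite -(ffact_fact ir).
  have -> : N ^ r = N ^ (r - i) * N ^ i by rewrite -expnD subnK.
  have -> : N ^ m = N ^ i * N ^ (m - i) by rewrite -expnD subnKC.
  move: (stirling2 m i) (r ^_ i) (N ^ (r - i)) ((r - i)`!) (N ^ i) (N ^ (m - i)) => a b c d e f.
  rewrite !mulnE; ring.
by rewrite ffact_small // !(mul0n, muln0).
Qed.
End Key.
Section Reals1.
Local Open Scope R_scope.

Lemma INR_expn a b : INR (a ^ b)%N = INR a ^ b.
Proof. elim: b => [|b IH] //=; by rewrite expnS mulnE mult_INR IH. Qed.

Lemma INR_sum (f : nat -> nat) k :
  sum_f_R0 (fun i => INR (f i)) k = INR (\sum_(i < k.+1) f i)%N.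
Proof.
elim: k => [|k IH]; first by rewrite big_ord_recr big_ord0 /=.
by rewrite /= IH [in RHS]big_ord_recr /= addnE plus_INR.
Qed.

Lemma INR_muln a b : INR (a * b)%N = INR a * INR b.
Proof. exact: mult_INR. Qed.

Lemma fact_eq k : Factorial.fact k = k`!.
Proof. by elim: k => //= k IH; rewrite factS IH. Qed.

Lemma sum_scal_r (f : nat -> R) x k :
  sum_f_R0 (fun i => f i * x) k = sum_f_R0 f k * x.
Proof. by rewrite -scal_sum Rmult_comm. Qed.
End Reals1.
Lemma card_sum (T : finType) (A : {set T}) : #|A| = (\sum_x ((x \in A) : nat))%N.
Proof. by rewrite -sum1_card big_mkcond. Qed.

Section Moment.
Local Open Scope R_scope.

Lemma count_eq n r m :
  (\sum_(j < (n.+1 * r).+1) j ^ m * #|[set s : wreath n.+1 r | #|Fix s| == j * n.+1]|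
   = \sum_(s : wreath n.+1 r) J s ^ m)%N.
Proof.
under [LHS]eq_bigr => j _ do rewrite card_sum big_distrr /=.
rewrite exchange_big /=; apply: eq_bigr => s _.
have lt : (J s < (n.+1 * r).+1)%N.
  rewrite ltnS; apply: leq_trans (J_le s) _; exact: leq_pmull.
rewrite (bigD1 (Ordinal lt)) //= inE Fix_card eqxx muln1.
rewrite [X in (_ + X)%N]big1 ?addn0 // => j nj.
rewrite inE Fix_card eqn_mul2r /=.
have ne : J s != j.
  apply/negP => /eqP e; move/eqP: nj; apply; apply: val_inj; by rewrite /= e.
by rewrite (negbTE ne) muln0.
Qed.

Lemma moment_eq n r m : moment_omega n.+1 r m =
  INR (\sum_(s : wreath n.+1 r) J s ^ m)%N / INR (n.+1 ^ r * r`!)%N.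
Proof.
rewrite /moment_omega /omega -(card_wreath n r) -count_eq -(INR_sum (fun j => j ^ m * #|[set s : wreath n.+1 r | #|Fix s| == j * n.+1]|)%N) /Rdiv -sum_scal_r.
apply: PartSum.sum_eq => j _; by rewrite INR_muln INR_expn Rmult_assoc.
Qed.
End Moment.
Section Part1.
Local Open Scope R_scope.

Lemma INR_nz k : (0 < k)%N -> INR k <> 0.
Proof. move=> h; apply: not_0_INR; move=> e; by rewrite e in h. Qed.

Lemma part1 n r m : moment_omega n.+1 r m =
  sum_f_R0 (fun i => INR (stirling2 m i) / INR n.+1 ^ i) (minn m r).
Proof.
rewrite moment_eq.
have K := key n r m.
have HK := f_equal INR K; rewrite !INR_muln in HK.
have hW : INR (n.+1 ^ r * r`!)%N <> 0.
  by apply: INR_nz; rewrite muln_gt0 expn_gt0 fact_gt0.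
have hN : INR (n.+1 ^ m)%N <> 0 by apply: INR_nz; rewrite expn_gt0.
have hn : INR n.+1 <> 0 by apply: INR_nz.
transitivity (sum_f_R0 (fun i => INR (stirling2 m i * n.+1 ^ (m - i))%N * / INR (n.+1 ^ m)%N) (minn m r)); last first.
  apply: PartSum.sum_eq => i hi.
  have : (i <= minn m r)%N by apply/leP.
  rewrite leq_min => /andP[im _].
  rewrite INR_muln !INR_expn.
  have e : INR n.+1 ^ m = INR n.+1 ^ i * INR n.+1 ^ (m - i) by rewrite -pow_add -addnE subnKC.
  rewrite e; field; split; apply: pow_nonzero => //.
rewrite sum_scal_r (INR_sum (fun i => stirling2 m i * n.+1 ^ (m - i))%N).
rewrite INR_muln in hW.
transitivity (INR (\sum_(s : wreath n.+1 r) J s ^ m)%N * INR (n.+1 ^ m)%N / (INR (n.+1 ^ r)%N * INR r`! * INR (n.+1 ^ m)%N)).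
  rewrite INR_muln; field; repeat split => //.
  by move=> h; apply: hW; rewrite h Rmult_0_r.
  by move=> h; apply: hW; rewrite h Rmult_0_l.
rewrite HK; field; repeat split => //.
  by move=> h; apply: hW; rewrite h Rmult_0_r.
by move=> h; apply: hW; rewrite h Rmult_0_l.
Qed.
End Part1.
Section Poisson.
Local Open Scope R_scope.

Lemma sum_n_zero (a : nat -> R) N : (forall k, (k <= N)%coq_nat -> a k = 0) -> sum_n a N = 0.
Proof.
move=> h; rewrite sum_n_Reals.
elim: N h => [|N IH] h /=; first by apply: h.
rewrite IH ?h //; first by rewrite Rplus_0_r.
by move=> k hk; apply: h; apply: le_S.
Qed.

Lemma exp_ser (lam : R) :
  is_series (fun k => / INR (Factorial.fact k) * lam ^ k) (exp lam).
Proof.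
apply/is_series_Reals; unfold exp; destruct (exist_exp lam) as [l h]; exact h.
Qed.

Definition aff (lam : R) (i j : nat) := INR (j ^_ i)%N * rho lam j.

Lemma series_ffact (lam : R) i :
  is_series (aff lam i) (lam ^ i).
Proof.
have shift : forall k, aff lam i (i + k)%coq_nat = (lam ^ i * exp (- lam)) * (/ INR (Factorial.fact k) * lam ^ k).
  move=> k; rewrite /aff /rho.
  have ff : INR ((i + k)%coq_nat ^_ i)%N * INR (Factorial.fact k) = INR (Factorial.fact (i + k)%coq_nat).
    rewrite -INR_muln !fact_eq -addnE; have := ffact_fact (leq_addr k i); by rewrite addKn => ->.
  have e : INR ((i + k)%coq_nat ^_ i)%N = INR (Factorial.fact (i + k)%coq_nat) / INR (Factorial.fact k).
    rewrite -ff; field; exact: INR_fact_neq_0.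
  rewrite e pow_add; field; split; exact: INR_fact_neq_0.
have base : is_series (fun k => aff lam i (i + k)%coq_nat) (lam ^ i).
  apply: (is_series_ext (fun k => (lam ^ i * exp (- lam)) * (/ INR (Factorial.fact k) * lam ^ k))).
    by move=> k; rewrite shift.
  set c := lam ^ i * exp (- lam).
  have -> : lam ^ i = c * exp lam.
    rewrite /c exp_Ropp; field; apply: Rgt_not_eq; exact: exp_pos.
  exact (is_series_scal_l c _ _ (@exp_ser lam)).
case: i shift base => [|i] shift base.
  exact: (is_series_ext _ _ _ (fun k => erefl) base).
apply: (is_series_decr_n (aff lam i.+1) i.+1); first by apply/ltP.
rewrite sum_n_zero; first by rewrite opp_zero plus_zero_r.
move=> k hk; rewrite /aff ffact_small ?Rmult_0_l //.
by apply/leP; apply: le_n_S.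
Qed.
End Poisson.
Section Final.
Local Open Scope R_scope.

Lemma lin_comb (c : nat -> R) (b : nat -> nat -> R) (L : nat -> R) k :
  (forall i, is_series (b i) (L i)) ->
  is_series (fun j => sum_f_R0 (fun i => c i * b i j) k) (sum_f_R0 (fun i => c i * L i) k).
Proof.
move=> h; elim: k => [|k IH] /=.
  exact (is_series_scal_l (c 0%N) _ _ (h 0%N)).
exact (is_series_plus _ _ _ _ IH (is_series_scal_l (c k.+1) _ _ (h k.+1))).
Qed.

Lemma part2 n r m : (m <= r)%N ->
  infinite_sum (fun j => INR j ^ m * rho (/ INR n.+1) j) (moment_omega n.+1 r m).
Proof.
move=> hm; rewrite part1 (minn_idPl hm).
have -> : sum_f_R0 (fun i => INR (stirling2 m i) / INR n.+1 ^ i) m =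
    sum_f_R0 (fun i => INR (stirling2 m i) * (/ INR n.+1) ^ i) m.
  by apply: PartSum.sum_eq => i _; rewrite pow_inv.
apply/is_series_Reals.
apply: (is_series_ext (fun j => sum_f_R0 (fun i => INR (stirling2 m i) * aff (/ INR n.+1) i j) m)).
  move=> j; rewrite -INR_expn (stirling_ffact j m).
  rewrite -(INR_sum (fun i => stirling2 m i * j ^_ i)%N) -sum_scal_r.
  apply: PartSum.sum_eq => i _; rewrite INR_muln /aff; ring.
exact (@lin_comb _ _ _ m (fun i => @series_ffact (/ INR n.+1) i)).
Qed.
End Final.

Theorem mainTheorem3 (n r m : nat) (hn : (1 <= n)%N) (hr : (1 <= r)%N) :
  moment_omega n r m =
    sum_f_R0 (fun i => Rdiv (INR (stirling2 m i)) (pow (INR n) i)) (minn m r)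
  /\ ((m <= r)%N ->
      (* M_m(rho_{1/n}) = sum_{j>=0} j^m rho_{1/n}(j) converges to M_m(omega_{n,r}) *)
      infinite_sum (fun j => Rmult (pow (INR j) m) (rho (Rinv (INR n)) j)) (moment_omega n r m)).
Proof.
case: n hn => [//|n] _.
split; first exact: part1.
exact: part2.
Qed.
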